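(* Let $D^1$ and $D^2$ be compatible POMDPs. A policy $\pi$ is Pareto optimal for the pair $(D^1,D^2)$ if and only if there exist weights $w^1,w^2\ge0$ with $w^1+w^2=1$ such that $\pi$ is an optimal policy (i.e. maximizes $\mathbb E[U;\pi]$ over all policies) for the single POMDP mixture $w^1D^1+w^2D^2$.
   Context: For $j\in\{1,2\}$, $D^j=(\mathcal S^j,\mathcal A,T^j,U^j,\mathcal O,\Omega^j,n)$ is a POMDP: finite state set $\mathcal S^j$, finite action set $\mathcal A$, finite observation set $\mathcal O$, $n$ time steps, initial distribution $\mathbb P^j(s_1)$, transitions $\mathbb P^j(s_{i+1}\mid s_i,a_i)$, observation probabilities $\mathbb P^j(o_i\mid s_i)$, utility $U^j:(\mathcal S^j)^n\to\mathbb R$. Compatible means same $\mathcal A$, $\mathcal O$, $n$. A policy $\pi=(\pi_1,\dots,\pi_n)$ gives distributions $\pi_i(\cdot\mid o_{\le i},a_{<i})$ on $\mathcal A$; $\mathbb P^j(\bar s,\bar o,\bar a;\pi)=\mathbb P^j(s_1)\prod_{i=1}^n\mathbb P^j(o_i\mid s_i)\pi_i(a_i\mid o_{\le i},a_{<i})\mathbb P^j(s_{i+1}\mid s_i,a_i)$ and $\mathbb E^j[U^j;\pi]=\sum_{\bar s}\mathbb P^j(\bar s;\pi)U^j(\bar s)$. The policy class is closed under mixtures: for policies $\pi_k$ and convex weights $\alpha_k$, $\sum_k\alpha_k\pi_k$ chooses once and for all before any input, with probability $\alpha_k$, to follow $\pi_k$, so that $\mathbb E^j[U^j;\sum_k\alpha_k\pi_k]=\sum_k\alpha_k\mathbb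 E^j[U^j;\pi_k]$. A policy $\pi$ is Pareto optimal for $(D^1,D^2)$ if for every policy $\pi'$, $\mathbb E^1[U^1;\pi]\ge\mathbb E^1[U^1;\pi']$ or $\mathbb E^2[U^2;\pi]\ge\mathbb E^2[U^2;\pi']$. The mixture $D=w^1D^1+w^2D^2$ is the POMDP with the same $\mathcal A,\mathcal O,n$, state set $\mathcal S=\{(j,s):j\in\{1,2\},s\in\mathcal S^j\}$, initial distribution $\mathbb P((j,s_1))=w^j\mathbb P^j(s_1)$, transitions $\mathbb P((j',s_{i+1})\mid(j,s_i),a_i)=\mathbb P^j(s_{i+1}\mid s_i,a_i)$ if $j'=j$ and $0$ otherwise (so $j$ is constant along a history), observation probabilities $\mathbb P(o_i\mid(j,s_i))=\mathbb P^j(o_i\mid s_i)$ (the policy does not observe $j$), and utility $U(j,\bar s)=U^j(\bar s)$. *)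

(* Defs.v *)
From HB Require Import structures.
From mathcomp Require Import all_boot all_order all_algebra.
From mathcomp Require Import reals.
Unset Printing Implicit Defensive.
Import Order.TTheory GRing.Theory Num.Theory.
Local Open Scope ring_scope.

(* A POMDP with action set A, observation set O and n time steps.
   States s_1..s_n are stored as an n.-tuple indexed 0..n-1. *)
Record pomdp (R : realType) (A O : finType) (n : nat) := Pomdp {
  st : finType;
  init : st -> R;
  trans : st -> A -> st -> R;     (* P(s_{i+1} | s_i, a_i) *)
  obs : st -> O -> R;
  util : n.-tuple st -> R
}.
Arguments Pomdp {R A O n}.
Arguments st {R A O n} p.
Arguments init {R A O n} p _.
Arguments trans {R A O n} p _ _ _.
Arguments obs {R A O n} p _ _.
Arguments util {R A O n} p _.

Definition valid_pomdp {R : realType} {A O : finType} {n : nat}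
    (D : pomdp R A O n) : Prop :=
  (forall s, 0 <= init D s) /\ \sum_s init D s = 1 /\
  (forall s a s', 0 <= trans D s a s') /\
  (forall s a, \sum_s' trans D s a s' = 1) /\
  (forall s o, 0 <= obs D s o) /\
  (forall s, \sum_o obs D s o = 1).

(* A behavioural policy: pi i (o_1..o_{i+1}) (a_1..a_i) a, for time index
   i = 0..n-1 (i.e. time step i+1). *)
Definition bpolicy (R : realType) (A O : finType) :=
  nat -> seq O -> seq A -> A -> R.

Definition valid_bpolicy {R : realType} {A O : finType} (p : bpolicy R A O) : Prop :=
  forall i os as_, (forall a, 0 <= p i os as_ a) /\ \sum_a p i os as_ a = 1.

(* The policy class: finite mixtures (chosen once and for all before any input)
   of behavioural policies; it contains behavioural policies (singletons) and is
   closed under mixtures. *)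
Definition policy (R : realType) (A O : finType) := seq (R * bpolicy R A O).

Definition valid_policy {R : realType} {A O : finType} (m : policy R A O) : Prop :=
  (forall i, (i < size m)%N ->
     0 <= (nth (0, fun _ _ _ _ => 0) m i).1 /\
     valid_bpolicy (nth (0, fun _ _ _ _ => 0) m i).2) /\
  \sum_(k <- m) k.1 = 1.

Definition trajP {R : realType} {A O : finType} {n : nat} (D : pomdp R A O n)
    (p : bpolicy R A O) (s : n.-tuple (st D)) (o : n.-tuple O) (a : n.-tuple A) : R :=
  (\prod_(i < n | i == 0 :> nat) init D (tnth s i)) *
  (\prod_(i < n) (obs D (tnth s i) (tnth o i) *
                  p i (take i.+1 o) (take i a) (tnth a i))) *
  (\prod_(i < n) \prod_(j < n | j == i.+1 :> nat)
       trans D (tnth s i) (tnth a i) (tnth s j)).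

Definition trajPm {R : realType} {A O : finType} {n : nat} (D : pomdp R A O n)
    (m : policy R A O) (s : n.-tuple (st D)) (o : n.-tuple O) (a : n.-tuple A) : R :=
  \sum_(k <- m) k.1 * trajP D k.2 s o a.

Definition EU {R : realType} {A O : finType} {n : nat} (D : pomdp R A O n)
    (m : policy R A O) : R :=
  \sum_(s : n.-tuple (st D))
     (\sum_(o : n.-tuple O) \sum_(a : n.-tuple A) trajPm D m s o a) * util D s.

Definition pareto_optimal {R : realType} {A O : finType} {n : nat}
    (D1 D2 : pomdp R A O n) (m : policy R A O) : Prop :=
  forall m', valid_policy m' -> EU D1 m' <= EU D1 m \/ EU D2 m' <= EU D2 m.

Definition optimal {R : realType} {A O : finType} {n : nat}
    (D : pomdp R A O n) (m : policy R A O) : Prop :=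
  forall m', valid_policy m' -> EU D m' <= EU D m.

(* The mixture w1 D1 + w2 D2; the state (j, s) is encoded as inl s (j = 1)
   or inr s (j = 2). *)
Definition mixture {R : realType} {A O : finType} {n : nat} (w1 w2 : R)
    (D1 D2 : pomdp R A O n) : pomdp R A O n :=
  @Pomdp R A O n (st D1 + st D2)%type
    (fun x => match x with inl s => w1 * init D1 s | inr s => w2 * init D2 s end)
    (fun x a y => match x, y with
                  | inl s, inl s' => trans D1 s a s'
                  | inr s, inr s' => trans D2 s a s'
                  | _, _ => 0 end)
    (fun x o => match x with inl s => obs D1 s o | inr s => obs D2 s o end)
    (fun t => \sum_(s1 : n.-tuple (st D1))
                 (if t == map_tuple inl s1 then util D1 s1 else 0)
            + \sum_(s2 : n.-tuple (st D2))
                 (if t == map_tuple inr s2 then util D2 s2 else 0)).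

(* Main.v *)
Require Import Defs.
From HB Require Import structures.
From mathcomp Require Import all_boot all_order all_algebra.
From mathcomp Require Import boolp classical_sets reals.
From mathcomp Require Import ring lra zify.
Import Order.TTheory GRing.Theory Num.Theory.
Local Open Scope classical_set_scope.
Local Open Scope ring_scope.

Lemma sep_claim (R : realType) (P : R -> R -> Prop)
  (cl : forall x1 y1 x2 y2 (t : R), P x1 y1 -> P x2 y2 -> 0 <= t -> t <= 1 ->
          P (t*x1+(1-t)*x2) (t*y1+(1-t)*y2))
  (np : forall x y, P x y -> x <= 0 \/ y <= 0) :
  forall u1 u2 v1 v2, P u1 u2 -> P v1 v2 -> u1 <= 0 -> 0 < v1 ->
    v1 * u2 - u1 * v2 <= 0.
Proof.
move=> u1 u2 v1 v2 Pu Pv hu hv.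
rewrite leNgt; apply/negP => hK.
set K := v1 * u2 - u1 * v2 in hK.
set e := K / (`|v2| + 1).
have he : 0 < e by rewrite divr_gt0 // ltr_wpDl.
have hev : e * `|v2| < K.
  rewrite /e mulrAC ltr_pdivrMr; last by rewrite ltr_wpDl.
  by rewrite mulrDr mulr1 ltrDl.
have hev2 : - K < e * v2.
  have := ler_norm (- v2); rewrite normrN => h.
  have : e * (- v2) <= e * `|v2| by rewrite ler_pM2l.
  lra.
set d := v1 - u1 + e.
have hd : 0 < d by rewrite /d; lra.
set t := v1 / d.
have Pt := cl _ _ _ _ t Pu Pv.
have ht0 : 0 <= t by rewrite /t divr_ge0 // ltW.
have ht1 : t <= 1 by rewrite /t ler_pdivrMr // mul1r /d; lra.
have := np _ _ (Pt ht0 ht1).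
have ex : (t * u1 + (1 - t) * v1) * d = e * v1.
  rewrite /t /d; field; rewrite /d in hd; lra.
have ey : (t * u2 + (1 - t) * v2) * d = K + e * v2.
  rewrite /t /K /d; field; rewrite /d in hd; lra.
case=> h.
- have : (t * u1 + (1 - t) * v1) * d <= 0 by rewrite mulr_le0_ge0 // ltW.
  rewrite ex; have : 0 < e * v1 by rewrite mulr_gt0. lra.
- have : (t * u2 + (1 - t) * v2) * d <= 0 by rewrite mulr_le0_ge0 // ltW.
  rewrite ey; lra.
Qed.

Lemma sep2 (R : realType) (P : R -> R -> Prop)
  (cl : forall x1 y1 x2 y2 (t : R), P x1 y1 -> P x2 y2 -> 0 <= t -> t <= 1 ->
          P (t*x1+(1-t)*x2) (t*y1+(1-t)*y2))
  (np : forall x y, P x y -> x <= 0 \/ y <= 0) :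
  exists w1 w2 : R, [/\ 0 <= w1, 0 <= w2, w1 + w2 = 1 &
     forall x y, P x y -> w1 * x + w2 * y <= 0].
Proof.
have C := @sep_claim R P cl np.
case: (pselect (exists x y, P x y /\ 0 < y)) => [[b1 [b2 [Pb hb2]]]|noy]; last first.
  exists 0, 1; split => //; first by rewrite add0r.
  move=> x y Pxy; rewrite mul0r add0r mul1r leNgt; apply/negP => hy.
  by apply: noy; exists x, y.
case: (pselect (exists x y, P x y /\ 0 < x)) => [[a1 [a2 [Pa ha1]]]|nox]; last first.
  exists 1, 0; split => //; first by rewrite addr0.
  move=> x y Pxy; rewrite mul0r addr0 mul1r leNgt; apply/negP => hx.
  by apply: nox; exists x, y.
have hb1 : b1 < 0.
  case: (np _ _ Pb); last by rewrite leNgt hb2.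
  rewrite le_eqVlt => /orP[/eqP e|//].
  have := C _ _ _ _ Pb Pa; rewrite e lexx => /(_ isT ha1).
  rewrite mul0r subr0 => h.
  have : 0 < a1 * b2 by rewrite mulr_gt0. lra.
pose S : set R := fun r => exists x y, [/\ P x y, x < 0 & r = y / (- x)].
have Sb : S (b2 / - b1) by exists b1, b2.
have ubS : ubound S (- a2 / a1).
  move=> r [x [y [Pxy hx ->]]].
  rewrite ler_pdivrMr ?oppr_gt0 // mulrAC ler_pdivlMr //.
  have := C _ _ _ _ Pxy Pa (ltW hx) ha1. lra.
have hS : S !=set0 by exists (b2 / - b1).
set l := sup S.
have lge : b2 / - b1 <= l by apply: (ub_le_sup (E := S)) => //; exists (- a2 / a1).
have lpos : 0 < l.
  apply: lt_le_trans lge; rewrite divr_gt0 // oppr_gt0 //.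
have key : forall x y, P x y -> l * x + y <= 0.
  move=> x y Pxy.
  case: (ltgtP x 0) => hx.
  - have : y / - x <= l.
      by apply: (ub_le_sup (E := S)); [exists (- a2 / a1)|exists x, y].
    rewrite ler_pdivrMr ?oppr_gt0 //. lra.
  - have : l <= - y / x.
      apply: ge_sup => // r [x' [y' [Pxy' hx' ->]]].
      rewrite ler_pdivrMr ?oppr_gt0 // mulrAC ler_pdivlMr //.
      have := C _ _ _ _ Pxy' Pxy (ltW hx') hx. lra.
    rewrite ler_pdivlMr //. lra.
  - subst x; rewrite mulr0 add0r.
    have := C _ _ _ _ Pxy Pa (lexx 0) ha1; rewrite mul0r subr0 => h.
    rewrite leNgt; apply/negP => hy.
    have : 0 < a1 * y by rewrite mulr_gt0. lra.
exists (l / (1 + l)), (1 / (1 + l)).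
have h1l : 0 < 1 + l by lra.
split.
- by rewrite divr_ge0 // ltW.
- by rewrite divr_ge0 // ltW.
- by field; rewrite gt_eqF.
- move=> x y Pxy; have := key _ _ Pxy.
  have -> : l / (1 + l) * x + 1 / (1 + l) * y = (l * x + y) / (1 + l).
    by field; rewrite gt_eqF.
  move=> h; rewrite mulr_le0_ge0 // invr_ge0 ltW //.
Qed.

Section P.
Variables (R : realType) (A O : finType) (n : nat).

Definition scalep (c : R) (m : policy R A O) : policy R A O :=
  map (fun k => (c * k.1, k.2)) m.

Lemma EU_cat (D : pomdp R A O n) m1 m2 : EU D (m1 ++ m2) = EU D m1 + EU D m2.
Proof.
rewrite /EU -big_split /=; apply: eq_bigr => s _; rewrite -mulrDl; congr (_ * _).
rewrite -big_split /=; apply: eq_bigr => o _.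
rewrite -big_split /=; apply: eq_bigr => a _.
by rewrite /trajPm big_cat.
Qed.

Lemma EU_scale (D : pomdp R A O n) c m : EU D (scalep c m) = c * EU D m.
Proof.
rewrite /EU mulr_sumr; apply: eq_bigr => s _; rewrite mulrA; congr (_ * _).
rewrite mulr_sumr; apply: eq_bigr => o _.
rewrite mulr_sumr; apply: eq_bigr => a _.
rewrite /trajPm big_map mulr_sumr; apply: eq_bigr => k _ /=.
by rewrite mulrA.
Qed.

Lemma valid_comb m1 m2 (t : R) : valid_policy m1 -> valid_policy m2 ->
  0 <= t -> t <= 1 -> valid_policy (scalep t m1 ++ scalep (1 - t) m2).
Proof.
move=> [v1 s1] [v2 s2] t0 t1; split; last first.
  rewrite big_cat !big_map /= -!mulr_sumr s1 s2; lra.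
move=> i; rewrite size_cat !size_map => hi.
rewrite nth_cat size_map; case: ifP => hi1.
  rewrite (nth_map (0, fun _ _ _ _ => 0)) //=.
  by have [h1 h2] := v1 i hi1; split => //; rewrite mulr_ge0.
have hi2 : (i - size m1 < size m2)%N.
  by move/negbT: hi1 hi; rewrite -leqNgt => hi1; rewrite ltn_subLR.
rewrite (nth_map (0, fun _ _ _ _ => 0)) //=.
have [] := v2 (i - size m1)%N hi2.
by move=> h1 h2; split => //; rewrite mulr_ge0 // subr_ge0.
Qed.

End P.
Arguments scalep {R A O}.
Arguments valid_comb {R A O}.
Arguments EU_cat {R A O n}.
Arguments EU_scale {R A O n}.
Lemma trajP_inl (R : realType) (A O : finType) (n : nat) (hn : (0 < n)%N) (w1 w2 : R)
  (D1 D2 : pomdp R A O n) p s o a :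
  trajP (mixture w1 w2 D1 D2) p (map_tuple inl s) o a = w1 * trajP D1 p s o a.
Proof.
have P0 : (fun i : 'I_n => nat_of_ord i == 0%N) =1 pred1 (Ordinal hn).
  by move=> i /=; rewrite -val_eqE.
rewrite /trajP !(big_pred1 (Ordinal hn) (P := fun i : 'I_n => nat_of_ord i == 0%N)) //.
rewrite !tnth_map /= -!mulrA; congr (_ * (_ * (_ * _))).
  by apply: eq_bigr => i _; rewrite tnth_map.
by apply: eq_bigr => i _; apply: eq_bigr => j _; rewrite !tnth_map.
Qed.

Lemma trajP_inr (R : realType) (A O : finType) (n : nat) (hn : (0 < n)%N) (w1 w2 : R)
  (D1 D2 : pomdp R A O n) p s o a :
  trajP (mixture w1 w2 D1 D2) p (map_tuple inr s) o a = w2 * trajP D2 p s o a.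
Proof.
have P0 : (fun i : 'I_n => nat_of_ord i == 0%N) =1 pred1 (Ordinal hn).
  by move=> i /=; rewrite -val_eqE.
rewrite /trajP !(big_pred1 (Ordinal hn) (P := fun i : 'I_n => nat_of_ord i == 0%N)) //.
rewrite !tnth_map /= -!mulrA; congr (_ * (_ * (_ * _))).
  by apply: eq_bigr => i _; rewrite tnth_map.
by apply: eq_bigr => i _; apply: eq_bigr => j _; rewrite !tnth_map.
Qed.

Lemma EU_mix (R : realType) (A O : finType) (n : nat) (hn : (0 < n)%N) (w1 w2 : R)
  (D1 D2 : pomdp R A O n) m :
  EU (mixture w1 w2 D1 D2) m = w1 * EU D1 m + w2 * EU D2 m.
Proof.
rewrite /EU /=.
under eq_bigr => t _ do rewrite mulrDr !mulr_sumr.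
rewrite big_split /= !mulr_sumr.
congr (_ + _); rewrite exchange_big /=; apply: eq_bigr => s _.
- rewrite (eq_bigr (fun t => if t == map_tuple inl s then
     (\sum_o \sum_a trajPm (mixture w1 w2 D1 D2) m t o a) * util D1 s else 0));
    last by move=> t _; case: eqP => _; rewrite ?mulr0.
  rewrite -big_mkcond big_pred1_eq mulrA; congr (_ * _).
  rewrite mulr_sumr; apply: eq_bigr => o _; rewrite mulr_sumr; apply: eq_bigr => a _.
  rewrite /trajPm mulr_sumr; apply: eq_bigr => k _.
  by rewrite trajP_inl // mulrCA.
- rewrite (eq_bigr (fun t => if t == map_tuple inr s then
     (\sum_o \sum_a trajPm (mixture w1 w2 D1 D2) m t o a) * util D2 s else 0));
    last by move=> t _; case: eqP => _; rewrite ?mulr0.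
  rewrite -big_mkcond big_pred1_eq mulrA; congr (_ * _).
  rewrite mulr_sumr; apply: eq_bigr => o _; rewrite mulr_sumr; apply: eq_bigr => a _.
  rewrite /trajPm mulr_sumr; apply: eq_bigr => k _.
  by rewrite trajP_inr // mulrCA.
Qed.

Theorem lemma2 (R : realType) (A O : finType) (n : nat)
    (D1 D2 : pomdp R A O n) (pi : policy R A O) :
  (0 < n)%N -> valid_pomdp D1 -> valid_pomdp D2 -> valid_policy pi ->
  (pareto_optimal D1 D2 pi <->
   exists w1 w2 : R, [/\ 0 <= w1, 0 <= w2, w1 + w2 = 1 &
                        optimal (mixture w1 w2 D1 D2) pi]).
Proof.
move=> hn vD1 vD2 vpi; split.
- move=> po.
  pose P x y := exists m', [/\ valid_policy m', x = EU D1 m' - EU D1 pi &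
                                y = EU D2 m' - EU D2 pi].
  have [w1 [w2 [h1 h2 h3 H]]] : exists w1 w2 : R, [/\ 0 <= w1, 0 <= w2,
     w1 + w2 = 1 & forall x y, P x y -> w1 * x + w2 * y <= 0];
    first apply: sep2.
  + move=> x1 y1 x2 y2 t [m1 [v1 -> ->]] [m2 [v2 -> ->]] t0 t1.
    exists (scalep t m1 ++ scalep (1 - t) m2); split; first exact: valid_comb.
      by rewrite !EU_cat !EU_scale; ring.
    by rewrite !EU_cat !EU_scale; ring.
  + move=> x y [m' [v -> ->]]; case: (po m' v) => h; [left|right]; lra.
  exists w1, w2; split => // m' vm'; rewrite !EU_mix //.
  have := H _ _ (ex_intro _ m' (And3 vm' erefl erefl)).
  rewrite !mulrBr => h; lra.
- move=> [w1 [w2 [h1 h2 h3 H]]] m' vm'.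
  have := H m' vm'; rewrite !EU_mix // => h.
  case: (lerP (EU D1 m') (EU D1 pi)) => a; first by left.
  case: (lerP (EU D2 m') (EU D2 pi)) => b; first by right.
  exfalso.
  have := a; rewrite -subr_gt0 => a'.
  have := b; rewrite -subr_gt0 => b'.
  move: (h1); rewrite le_eqVlt => /orP[/eqP e1|p1].
    subst w1; rewrite mul0r add0r in h; have e2 : w2 = 1 by lra.
    subst w2; rewrite !mul1r in h; lra.
  have : 0 < w1 * (EU D1 m' - EU D1 pi) by rewrite mulr_gt0.
  have : 0 <= w2 * (EU D2 m' - EU D2 pi) by rewrite mulr_ge0 // ltW.
  rewrite !mulrBr; lra.
Qed.
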